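(* Let $n\ge 5$ and let $C_n$ be the cycle with $n$ vertices. Then $C_n$ is not a $3$-threshold graph: there are no real numbers $\theta_1<\theta_2<\theta_3$ and map $r:V(C_n)\to\mathbb{R}$ such that for all distinct vertices $u,v$, $uv$ is an edge if and only if $r(u)+r(v)\in[\theta_1,\theta_2)\cup[\theta_3,\infty)$.
   Context: All graphs are finite and simple. $C_n$ denotes the cycle with $n$ vertices. *)

(* Defs.v *)
From mathcomp Require Import all_boot.
From Stdlib Require Import Reals.
Set Implicit Arguments. Unset Strict Implicit. Unset Printing Implicit Defensive.

Definition cycle_adj (n : nat) (i j : 'I_n) : bool :=
  (val j == (val i).+1 %% n) || (val i == (val j).+1 %% n).

Definition is_3_threshold (V : finType) (adj : V -> V -> bool) : Prop :=
  exists (th1 th2 th3 : R) (r : V -> R),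
    (th1 < th2 < th3)%R /\
    forall u v : V, u <> v ->
      (adj u v <-> ((th1 <= r u + r v < th2)%R \/ (th3 <= r u + r v)%R)).

(* Main.v *)
Require Import Defs.
From mathcomp Require Import all_boot zify.
From Stdlib Require Import Reals Lra.
Set Implicit Arguments.
Definition cadj (n i j : nat) : Prop :=
  j = i.+1 \/ (i.+1 = n /\ j = 0) \/ i = j.+1 \/ (j.+1 = n /\ i = 0).
Lemma c4 n x y u v : 5 <= n -> x < n -> y < n -> u < n -> v < n ->
  x <> u -> y <> v -> cadj n x y -> cadj n y u -> cadj n u v -> cadj n v x -> False.
Proof. rewrite /cadj; lia. Qed.
Lemma tri n x y u : 5 <= n -> x < n -> y < n -> u < n ->
  cadj n x y -> cadj n y u -> cadj n u x -> False.
Proof. rewrite /cadj; lia. Qed.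
Lemma deg3 n i p q s : 5 <= n -> i < n -> p < n -> q < n -> s < n ->
  p <> q -> p <> s -> q <> s -> cadj n i p -> cadj n i q -> cadj n i s -> False.
Proof. rewrite /cadj; lia. Qed.
Lemma csym n i j : cadj n i j -> cadj n j i.
Proof. rewrite /cadj; lia. Qed.
Lemma cirr n i : 5 <= n -> i < n -> ~ cadj n i i.
Proof. rewrite /cadj; lia. Qed.
Lemma cneq n i j : 5 <= n -> i < n -> cadj n i j -> i <> j.
Proof. rewrite /cadj; lia. Qed.
Lemma nbrs n i : 5 <= n -> i < n -> exists p q, p < n /\ q < n /\ p <> q /\ cadj n i p /\ cadj n i q.
Proof.
move=> h5 hi; case: (ltnP i.+1 n) => h1.
- case: i hi h1 => [|i] hi h1.
  + exists 1, n.-1; rewrite /cadj; lia.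
  + exists i.+2, i; rewrite /cadj; lia.
- exists 0, i.-1; rewrite /cadj; lia.
Qed.
Arguments nbrs {n i}. Arguments c4 {n x y u v}. Arguments tri {n x y u}. Arguments deg3 {n i p q s}. Arguments csym {n i j}. Arguments cirr {n i}. Arguments cneq {n i j}.
Lemma ex_max (g : nat -> R) m : exists k, k <= m /\ forall j, j <= m -> (g j <= g k)%R.
Proof.
elim: m => [|m [k [hk IH]]].
- exists 0; split => // j hj; have -> : j = 0 by lia. lra.
- case: (Rle_lt_dec (g m.+1) (g k)) => h.
  + exists k; split; first lia. move=> j hj; case: (ltnP j m.+1) => hj'.
    * apply: IH; lia.
    * have -> : j = m.+1 by lia. lra.
  + exists m.+1; split => // j hj; case: (ltnP j m.+1) => hj'.
    * have := IH j ltac:(lia). lra.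
    * have -> : j = m.+1 by lia. lra.
Qed.
Lemma ex_min (g : nat -> R) m : exists k, k <= m /\ forall j, j <= m -> (g k <= g j)%R.
Proof.
have [k [hk H]] := ex_max (fun x => - g x)%R m.
exists k; split => // j hj; have := H j hj; lra.
Qed.

Lemma core n (g : nat -> R) (t1 t2 t3 : R) :
  5 <= n -> (t1 < t2)%R -> (t2 < t3)%R ->
  (forall i j, i < n -> j < n -> i <> j ->
     (cadj n i j <-> ((t1 <= g i + g j < t2)%R \/ (t3 <= g i + g j)%R))) ->
  False.
Proof.
move=> h5 h12 h23 H.
have Ege : forall i j, i < n -> j < n -> cadj n i j -> (t1 <= g i + g j)%R.
  move=> i j hi hj e; have ij : i <> j := cneq h5 hi e.
  have := (proj1 (H i j hi hj ij) e); lra.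
have Ene : forall i j, i < n -> j < n -> i <> j -> ~ cadj n i j ->
   ((g i + g j < t1)%R \/ (t2 <= g i + g j < t3)%R).
  move=> i j hi hj ij ne.
  case: (Rlt_le_dec (g i + g j) t1) => a1; first by left.
  case: (Rlt_le_dec (g i + g j) t2) => a2.
    by exfalso; apply: ne; apply/(H i j hi hj ij); left; lra.
  case: (Rlt_le_dec (g i + g j) t3) => a3; first by right; lra.
  by exfalso; apply: ne; apply/(H i j hi hj ij); right.
have Emid : forall i j, i < n -> j < n -> i <> j -> (t1 <= g i + g j < t2)%R -> cadj n i j.
  by move=> i j hi hj ij hh; apply/(H i j hi hj ij); left.
have Ehi : forall i j, i < n -> j < n -> i <> j -> (t3 <= g i + g j)%R -> cadj n i j.
  by move=> i j hi hj ij hh; apply/(H i j hi hj ij); right.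
have Elt : forall i j, i < n -> j < n -> cadj n i j -> (g i + g j < t3)%R ->
     (t1 <= g i + g j < t2)%R.
  move=> i j hi hj e hh; have ij : i <> j := cneq h5 hi e.
  have := (proj1 (H i j hi hj ij) e); lra.
have [a [ha amax]] := ex_max g n.-1.
have [z [hz zmin]] := ex_min g n.-1.
have ha' : a < n by lia.
have hz' : z < n by lia.
have amax' : forall j, j < n -> (g j <= g a)%R by move=> j hj; apply: amax; lia.
have zmin' : forall j, j < n -> (g z <= g j)%R by move=> j hj; apply: zmin; lia.
have [p [q [hp [hq [pq [ap aq]]]]]] := nbrs h5 ha'.
have pa : p <> a := nesym (cneq h5 ha' ap).
have qa : q <> a := nesym (cneq h5 ha' aq).
have only : forall x, x < n -> cadj n a x -> x = p \/ x = q.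
  move=> x hx e; case: (eqVneq x p) => [->|xp]; first by left.
  case: (eqVneq x q) => [->|xq]; first by right.
  move/eqP: xp => xp; move/eqP: xq => xq; exfalso; apply: (deg3 h5 ha' hp hq hx) => //; exact: nesym.
have nonhi : forall x, x < n -> x <> p -> x <> q -> x <> a -> (g a + g x < t3)%R.
  move=> x hx xp xq xa; case: (Rlt_le_dec (g a + g x) t3) => // hh; exfalso.
  have := only x hx (Ehi a x ha' hx (nesym xa) hh); tauto.
have caseI : forall p q, p < n -> q < n -> p <> q -> cadj n a p -> cadj n a q ->
   (g p <= g q)%R -> (g a + g p < t3)%R -> (g a + g q < t3)%R -> False.
  move=> {only nonhi pq ap aq hp hq pa qa p q} p q hp hq pq ap aq le apl aql.
  have pa : p <> a := nesym (cneq h5 ha' ap).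
  have qa : q <> a := nesym (cneq h5 ha' aq).
  have only' : forall x, x < n -> cadj n a x -> x = p \/ x = q.
    move=> x hx e; case: (eqVneq x p) => [->|xp]; first by left.
    case: (eqVneq x q) => [->|xq]; first by right.
    move/eqP: xp => xp; move/eqP: xq => xq; exfalso; apply: (deg3 h5 ha' hp hq hx) => //; exact: nesym.
  have [w1 [w2 [hw1 [hw2 [w12 [pw1 pw2]]]]]] := nbrs h5 hp.
  have [w [hw [pw wa]]] : exists w, w < n /\ cadj n p w /\ w <> a.
    case: (eqVneq w1 a) => [e|]; last by move/eqP=> ?; exists w1.
    by exists w2; split => //; split => //; move=> ?; subst.
  have wp : w <> p := nesym (cneq h5 hp pw).
  case: (eqVneq w q) => [wq|/eqP wq].
    subst w; apply: (tri h5 ha' hp hq) => //; exact: csym.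
  have apm := Elt a p ha' hp ap apl.
  have aqm := Elt a q ha' hq aq aql.
  have naw : ~ cadj n a w by move=> e; have := only' w hw e; tauto.
  have := Ene a w ha' hw (nesym wa) naw.
  have := Ege p w hp hw pw. have := amax' w hw.
  move=> h1 h2 h3; have h4 := amax' p hp.
  have gw : (g q <= g w)%R by lra.
  have qw : cadj n q w.
    apply: Emid => //; [exact: nesym|lra].
  by apply: (c4 h5 ha' hp hw hq (nesym wa) pq ap pw (csym qw) (csym aq)).
have caseIIb : forall p q, p < n -> q < n -> p <> q -> cadj n a p -> cadj n a q ->
   (t3 <= g a + g p)%R -> (g a + g q < t3)%R -> False.
  move=> {only nonhi pq ap aq hp hq pa qa p q} p q hp hq pq ap aq aph aql.
  have qa : q <> a := nesym (cneq h5 ha' aq).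
  have pa : p <> a := nesym (cneq h5 ha' ap).
  have only' : forall x, x < n -> cadj n a x -> x = p \/ x = q.
    move=> x hx e; case: (eqVneq x p) => [->|xp]; first by left.
    case: (eqVneq x q) => [->|xq]; first by right.
    move/eqP: xp => xp; move/eqP: xq => xq; exfalso; apply: (deg3 h5 ha' hp hq hx) => //; exact: nesym.
  have [w1 [w2 [hw1 [hw2 [w12 [pw1 pw2]]]]]] := nbrs h5 hq.
  have [d [hd [qd da]]] : exists w, w < n /\ cadj n q w /\ w <> a.
    case: (eqVneq w1 a) => [e|]; last by move/eqP=> ?; exists w1.
    by exists w2; split => //; split => //; move=> ?; subst.
  have dq : d <> q := nesym (cneq h5 hq qd).
  case: (eqVneq d p) => [dp|/eqP dp].
    subst d; apply: (tri h5 ha' hp hq ap) => //; exact: csym.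
  have aqm := Elt a q ha' hq aq aql.
  have dl : (g a + g d < t3)%R.
    case: (Rlt_le_dec (g a + g d) t3) => // hh; exfalso.
    have := only' d hd (Ehi a d ha' hd (nesym da) hh); tauto.
  have qdl := Ege q d hq hd qd.
  have qp : cadj n q p by apply: Emid => //; [exact: nesym|have := amax' p hp; lra].
  apply: (tri h5 ha' hp hq ap (csym qp) (csym aq)).
have caseIIa : forall p q, p < n -> q < n -> p <> q -> cadj n a p -> cadj n a q ->
   (g q <= g p)%R -> (t3 <= g a + g p)%R -> (t3 <= g a + g q)%R -> False.
  move=> {only nonhi pq ap aq hp hq pa qa p q} p q hp hq pq ap aq le aph aqh.
  have qa : q <> a := nesym (cneq h5 ha' aq).
  have pa : p <> a := nesym (cneq h5 ha' ap).
  have only' : forall x, x < n -> cadj n a x -> x = p \/ x = q.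
    move=> x hx e; case: (eqVneq x p) => [->|xp]; first by left.
    case: (eqVneq x q) => [->|xq]; first by right.
    move/eqP: xp => xp; move/eqP: xq => xq; exfalso; apply: (deg3 h5 ha' hp hq hx) => //; exact: nesym.
  have npq : ~ cadj n p q by move=> e; apply: (tri h5 ha' hp hq ap e (csym aq)).
  have [w1 [w2 [hw1 [hw2 [w12 [pw1 pw2]]]]]] := nbrs h5 hp.
  have [b' [hb [pb ba]]] : exists w, w < n /\ cadj n p w /\ w <> a.
    case: (eqVneq w1 a) => [e|]; last by move/eqP=> ?; exists w1.
    by exists w2; split => //; split => //; move=> ?; subst.
  have bp : b' <> p := nesym (cneq h5 hp pb).
  have bq : b' <> q by move=> ?; subst.
  have [v1 [v2 [hv1 [hv2 [v12 [qv1 qv2]]]]]] := nbrs h5 hq.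
  have [c' [hc [qc ca]]] : exists w, w < n /\ cadj n q w /\ w <> a.
    case: (eqVneq v1 a) => [e|]; last by move/eqP=> ?; exists v1.
    by exists v2; split => //; split => //; move=> ?; subst.
  have cq : c' <> q := nesym (cneq h5 hq qc).
  have cp : c' <> p by move=> ?; subst; apply: npq; exact: csym.
  have bc : b' <> c'.
    move=> ?; subst c'.
    by apply: (c4 h5 ha' hp hb hq (nesym ba) pq ap pb (csym qc) (csym aq)).
  have pbl : (g p + g b' < t3)%R.
    case: (Rlt_le_dec (g p + g b') t3) => // hh; exfalso.
    have hab : (t3 <= g a + g b')%R by have := amax' p hp; lra.
    have := only' b' hb (Ehi a b' ha' hb (nesym ba) hab); tauto.
  have pbm := Elt p b' hp hb pb pbl.
  have qbl : (g q + g b' < t1)%R.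
    case: (Rlt_le_dec (g q + g b') t1) => // hh; exfalso.
    have qb : cadj n q b' by apply: Emid => //; [exact: nesym|lra].
    exact: (deg3 h5 hq ha' hc hb (nesym ca) (nesym ba) (nesym bc) (csym aq) qc qb).
  have [u1 [u2 [hu1 [hu2 [u12 [zu1 zu2]]]]]] := nbrs h5 hz'.
  have [d [hd [zd [da dp]]]] : exists d, d < n /\ cadj n z d /\ d <> a /\ d <> p.
    case: (eqVneq u1 a) => [e1|/eqP e1]; last first.
      case: (eqVneq u1 p) => [e2|/eqP e2]; last by exists u1.
      subst u1.
      case: (eqVneq u2 a) => [e3|/eqP e3]; last by exists u2; split => //; split => //; split => //; move=> ?; subst.
      subst u2.
      have zq : z = q.
        have := only' z hz' (csym zu2).
        case => // ?; subst; exfalso; exact: (cirr h5 hp zu1).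
      subst z; exfalso; apply: npq; exact: csym.
    subst u1.
    case: (eqVneq u2 p) => [e3|/eqP e3]; last by exists u2; split => //; split => //; split => //; move=> ?; subst.
    subst u2.
    have zq : z = q.
      have := only' z hz' (csym zu1).
      case => // ?; subst; exfalso; exact: (cirr h5 hp zu2).
    subst z; exfalso; apply: npq; exact: csym.
  have gd : (g d <= g q)%R.
    case: (eqVneq d q) => [->|/eqP dq]; first lra.
    have dl : (g a + g d < t3)%R.
      case: (Rlt_le_dec (g a + g d) t3) => // hh; exfalso.
      have := only' d hd (Ehi a d ha' hd (nesym da) hh); tauto.
    lra.
  have := Ege z d hz' hd zd. have := zmin' b' hb. lra.
case: (Rlt_le_dec (g a + g p) t3) => h1; case: (Rlt_le_dec (g a + g q) t3) => h2.
- case: (Rle_lt_dec (g p) (g q)) => h.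
  + exact: (caseI p q).
  + apply: (caseI q p) => //; [exact: nesym|lra].
- apply: (caseIIb q p) => //; exact: nesym.
- exact: (caseIIb p q).
- case: (Rle_lt_dec (g q) (g p)) => h.
  + exact: (caseIIa p q).
  + apply: (caseIIa q p) => //; [exact: nesym|lra].
Qed.

Lemma modS_eq n i : i < n -> (i.+1 %% n = if i.+1 < n then i.+1 else 0).
Proof.
move=> hi; case: ltnP => h; first exact: modn_small.
have -> : i.+1 = n by lia. exact: modnn.
Qed.

Lemma adjN n x y : x < n -> y < n ->
  ((y == x.+1 %% n) || (x == y.+1 %% n)) <-> cadj n x y.
Proof.
move=> hi hj; rewrite /cadj (@modS_eq n x hi) (@modS_eq n y hj).
case: (ltnP x.+1 n) => h1; case: (ltnP y.+1 n) => h2.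
all: split; [case/orP => /eqP e; lia|
   move=> h; apply/orP; case: h => [e|[e|[e|e]]]; [left|left|right|right]; apply/eqP; lia].
Qed.

Lemma adjE n (i j : 'I_n) : cycle_adj i j <-> cadj n i j.
Proof. exact: (@adjN n i j (ltn_ord i) (ltn_ord j)). Qed.

Theorem mainTheorem5 (n : nat) (hn : 5 <= n) :
  ~ is_3_threshold (@cycle_adj n).
Proof.
case=> t1 [t2 [t3 [r [[h12 h23] H]]]].
case: n hn r H => [//|m] hn r H.
apply: (@core m.+1 (fun k => r (@inord m k)) t1 t2 t3 hn h12 h23).
move=> i j hi hj ij.
have ne : @inord m i <> @inord m j.
  by move=> e; apply: ij; have := congr1 val e; rewrite /= !inordK.
have := H _ _ ne; rewrite adjE !inordK //.
Qed.
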